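(* Let $f\in\Gamma_0(X)$ and $x\in\operatorname{dom}f$. Then for every $\varepsilon\ge0$, \[ \partial_\varepsilon f^+(x)=\bigcup_{0\le\lambda\le1}\partial_{\varepsilon+\lambda f(x)-f^+(x)}(\lambda f)(x), \] where $f^+:=\max\{f,0\}$, $(\lambda f)(z):=\lambda f(z)$ for $\lambda>0$, and $0f:=\mathrm{I}_{\operatorname{dom}f}$.
   Context: $X$ is a real separated locally convex space with dual $X^*$ (weak$^*$ topology). $\Gamma_0(X)$ is the set of proper convex lsc functions $X\to\mathbb{R}\cup\{+\infty\}$; $\operatorname{dom}f=\{x: f(x)<+\infty\}$. $\mathrm{I}_A$ is the indicator function of $A$ ($0$ on $A$, $+\infty$ outside). For $g:X\to\overline{\mathbb{R}}$, $\partial_\delta g(x)=\{x^*\in X^*:\ g(y)\ge g(x)+\langle x^*,y-x\rangle-\delta\ \forall y\}$ if $g(x)\in\mathbb{R}$ and $\delta\ge0$, and $\partial_\delta g(x)=\emptyset$ if $g(x)\notin\mathbb{R}$ or $\delta<0$. *)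

(* Defs.v *)
From HB Require Import structures.
From mathcomp Require Import all_boot all_order all_algebra.
From mathcomp Require Import all_classical all_reals all_analysis.
Set Implicit Arguments. Unset Strict Implicit. Unset Printing Implicit Defensive.
Import Order.TTheory GRing.Theory Num.Theory.
Local Open Scope classical_set_scope.
Local Open Scope ring_scope.

Section Defs.
Context {R : realType} {X : tvsType R}.
Local Open Scope ereal_scope.

Definition dom (f : X -> \bar R) : set X := [set x | f x < +oo].

Definition indic (A : set X) : X -> \bar R :=
  fun z => if `[< A z >] then 0 else +oo.

Definition proper_fun (f : X -> \bar R) : Prop :=
  (forall z, f z != -oo) /\ exists z, f z < +oo.

Definition convex_efun (f : X -> \bar R) : Prop :=
  forall (x y : X) (t : R), (0 <= t <= 1)%R -> f x < +oo -> f y < +oo ->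
    f ((1 - t) *: x + t *: y)%R <= ((1 - t)%R%:E * f x + t%:E * f y).

Definition Gamma0 (f : X -> \bar R) : Prop :=
  [/\ proper_fun f, convex_efun f & lower_semicontinuous f].

Definition dual_elt (xs : {linear X -> R^o}) : Prop := continuous xs.

Definition esubdiff (delta : R) (g : X -> \bar R) (x : X)
    : set {linear X -> R^o} :=
  [set xs | dual_elt xs /\ g x \is a fin_num /\ (0 <= delta)%R /\
     forall y, g x + ((xs (y - x))%R - delta)%:E <= g y].

Definition fplus (f : X -> \bar R) : X -> \bar R := fun z => maxe (f z) 0.

Definition scalef (l : R) (f : X -> \bar R) : X -> \bar R :=
  if (0 < l)%R then (fun z => l%:E * f z) else indic (dom f).

End Defs.

(* Main.v *)
Require Import Defs.
From HB Require Import structures.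
From mathcomp Require Import all_boot all_order all_algebra.
From mathcomp Require Import all_classical all_reals all_analysis.
From mathcomp Require Import ring lra.
Import Order.TTheory GRing.Theory Num.Theory.
Local Open Scope classical_set_scope.
Local Open Scope ring_scope.

Lemma cross_le (R : realType) (T : Type) (D : set T) (F H : T -> R) :
  (forall y, D y -> H y <= Num.max (F y) 0) ->
  (forall y0 y1 t, D y0 -> D y1 -> 0 <= t <= 1 -> exists z, D z /\
      F z <= (1 - t) * F y0 + t * F y1 /\ H z = (1 - t) * H y0 + t * H y1) ->
  forall y0 y1, D y0 -> D y1 -> 0 < F y0 -> F y1 < 0 ->
  H y0 / F y0 <= H y1 / F y1.
Proof.
move=> Hm Hc y0 y1 D0 D1 F0 F1.
set t := F y0 / (F y0 - F y1).
have dpos : 0 < F y0 - F y1 by lra.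
have ht : 0 <= t <= 1.
  apply/andP; split; first by rewrite /t divr_ge0 // ltW.
  by rewrite /t ler_pdivrMr // mul1r; lra.
have [z [Dz [Fz Hz]]] := Hc y0 y1 t D0 D1 ht.
have e1 : t * (F y0 - F y1) = F y0 by rewrite /t mulfVK // gt_eqF.
have Fz0 : F z <= 0.
  apply: (le_trans Fz); suff -> : (1 - t) * F y0 + t * F y1 = 0 by [].
  have : (1 - t) * F y0 + t * F y1 = F y0 - t * (F y0 - F y1) by ring.
  by rewrite e1 subrr.
have Hz0 : H z <= 0 by have := Hm z Dz; rewrite max_r.
rewrite Hz in Hz0.
have key : (1 - t) * H y0 + t * H y1 = ((- F y1) * H y0 + F y0 * H y1) / (F y0 - F y1).
  have e2 : 1 - t = - F y1 / (F y0 - F y1).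
    rewrite /t; field; lra.
  by rewrite e2 /t; field; lra.
rewrite key pmulr_lle0 ?invr_gt0 // in Hz0.
rewrite ler_pdivrMr // mulrAC ler_ndivlMr //.
lra.
Qed.

Lemma exists_lambda (R : realType) (T : Type) (D : set T) (F H : T -> R) :
  (forall y, D y -> H y <= Num.max (F y) 0) ->
  (forall y0 y1 t, D y0 -> D y1 -> 0 <= t <= 1 -> exists z, D z /\
      F z <= (1 - t) * F y0 + t * F y1 /\ H z = (1 - t) * H y0 + t * H y1) ->
  exists l, 0 <= l <= 1 /\ forall y, D y -> H y <= l * F y.
Proof.
move=> Hm Hc.
pose L := [set r : R | r = 0 \/ exists y, [/\ D y, 0 < F y & r = H y / F y]].
have L0 : L 0 by left.
have Lub : ubound L 1.
  move=> r [->|[y [Dy Fy ->]]]; first exact: ler01.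
  rewrite ler_pdivrMr // mul1r.
  by have := Hm y Dy; rewrite max_l // ltW.
have hs : has_sup L by split; [exists 0 | exists 1].
exists (sup L); split.
  apply/andP; split; first exact: sup_upper_bound hs _ L0.
  by apply: ge_sup => //; exists 0.
move=> y Dy.
have [Fp|Fn|F0] := ltgtP (F y) 0.
- have Hy : H y <= 0 by have := Hm y Dy; rewrite max_r // ltW.
  have : sup L <= H y / F y.
    apply: ge_sup; first by exists 0.
    move=> r [->|[y0 [D0 F0 ->]]].
      by rewrite ler_ndivlMr // mul0r.
    exact: (@cross_le _ _ _ _ _ Hm Hc _ _ D0 Dy F0 Fp).
  by rewrite ler_ndivlMr // mulrC.
- have : H y / F y <= sup L.
    apply: sup_upper_bound hs _ _; right; by exists y.
  by rewrite ler_pdivrMr // mulrC.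
- by have := Hm y Dy; rewrite F0 maxxx mulr0.
Qed.
Lemma scalef_fin (R : realType) (X : tvsType R) (f : X -> \bar R) (l r : R) y :
  0 <= l -> f y = r%:E -> scalef l f y = (l * r)%:E.
Proof.
move=> l0 fy; rewrite /scalef; case: ifPn => lp; first by rewrite fy EFinM.
have -> : l = 0 by apply/eqP; rewrite eq_le l0 andbT leNgt.
rewrite /Defs.indic /Defs.dom /= fy mul0r; case: asboolP => //; by rewrite ltry.
Qed.

Lemma scalef_inf (R : realType) (X : tvsType R) (f : X -> \bar R) (l : R) y :
  0 <= l -> f y = +oo%E -> scalef l f y = +oo%E.
Proof.
move=> l0 fy; rewrite /scalef; case: ifPn => lp; first by rewrite fy gt0_muley ?lte_fin.
rewrite /Defs.indic /Defs.dom /= fy; case: asboolP => //; by rewrite ltxx.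
Qed.

Lemma maxe_fin (R : realType) (r : R) : maxe r%:E 0%E = (Num.max r 0)%:E.
Proof. by rewrite -EFin_max. Qed.

Arguments scalef_fin {R X f l r y}.
Arguments scalef_inf {R X f l y}.

Theorem lemma4 (R : realType) (X : tvsType R) (f : X -> \bar R) (x : X)
  (eps : R) :
  hausdorff_space X -> Gamma0 f -> dom f x -> 0 <= eps ->
  esubdiff eps (fplus f) x =
  \bigcup_(l in `[0, 1]) esubdiff (eps + l * fine (f x) - fine (fplus f x))
                                   (scalef l f) x.
Proof.
move=> _ [[fnoo _] fcvx _] domx eps0.
have fxE : f x = (fine (f x))%:E.
  by rewrite fineK // fin_numE fnoo /=; move: domx; rewrite /Defs.dom /= => /lt_eqF ->.
set fx := fine (f x) in fxE *.
have fpE : fplus f x = (Num.max fx 0)%:E by rewrite /fplus fxE maxe_fin.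
rewrite fpE /=.
apply/seteqP; split => xs.
- move=> [cxs [_ [_ Hs]]].
  have finE : forall y, Defs.dom f y -> f y = (fine (f y))%:E.
    move=> y Dy; rewrite fineK // fin_numE fnoo /=.
    by move: Dy; rewrite /Defs.dom /= => /lt_eqF ->.
  have Hm : forall y, Defs.dom f y ->
      Num.max fx 0 - eps + xs (y - x) <= Num.max (fine (f y)) 0.
    move=> y Dy; have := Hs y; rewrite /fplus fxE (finE y Dy) !maxe_fin -EFinD lee_fin.
    lra.
  have Hc : forall y0 y1 (t : R), Defs.dom f y0 -> Defs.dom f y1 -> 0 <= t <= 1 ->
      exists z, Defs.dom f z /\
      fine (f z) <= (1 - t) * fine (f y0) + t * fine (f y1) /\
      Num.max fx 0 - eps + xs (z - x) =
        (1 - t) * (Num.max fx 0 - eps + xs (y0 - x)) +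
        t * (Num.max fx 0 - eps + xs (y1 - x)).
    move=> y0 y1 t D0 D1 ht.
    have := fcvx y0 y1 t ht D0 D1.
    rewrite (finE y0 D0) (finE y1 D1) -!EFinM -EFinD => hz.
    have Dz : Defs.dom f ((1 - t) *: y0 + t *: y1).
      by rewrite /Defs.dom /=; apply: le_lt_trans hz _; rewrite ltry.
    exists ((1 - t) *: y0 + t *: y1); split => //; split.
      by move: hz; rewrite (finE _ Dz) lee_fin.
    rewrite !raddfB /= linearD /= !linearZ /=.
    rewrite /GRing.scale /=.
    ring.
  have [l [/andP[l0 l1] hl]] := @exists_lambda R X (Defs.dom f) (fun y => fine (f y))
     (fun y => Num.max fx 0 - eps + xs (y - x)) Hm Hc.
  exists l; first by rewrite /= in_itv /= l0 l1.
  split => //; split; first by rewrite (scalef_fin l0 fxE).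
  split.
    have := hl x domx; rewrite subrr raddf0 addr0 -/fx; lra.
  move=> y; rewrite (scalef_fin l0 fxE).
  case fyE : (f y) => [fy| |].
  + have Dy : Defs.dom f y by rewrite /Defs.dom /= fyE ltry.
    rewrite (scalef_fin l0 fyE) -EFinD lee_fin.
    have := hl y Dy; rewrite fyE /=; lra.
  + by rewrite (scalef_inf l0 fyE) leey.
  + by move: (fnoo y); rewrite fyE.
- move=> [l]; rewrite /= in_itv /= => /andP[l0 l1] [cxs [_ [d0 Hs]]].
  split => //; split; first by rewrite fpE.
  split => // y.
  have := Hs y; rewrite (scalef_fin l0 fxE).
  case fyE : (f y) => [fy| |].
  + rewrite (scalef_fin l0 fyE) /fplus fyE fxE !maxe_fin -!EFinD !lee_fin => h.
    have hm : l * fy <= Num.max fy 0.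
      have [fy0|fy0] := leP 0 fy.
        nra.
      nra.
    lra.
  + by rewrite /fplus fyE leey.
  + by move: (fnoo y); rewrite fyE.
Qed.
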